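(* Let $X$ be a finite-dimensional real vector space of dimension greater than two, let $\mathcal{P}$ and $\mathcal{Q}$ be two convex bodies in $X$ which contain the origin as an interior point, and let $W\subset X$ be a $1$-dimensional subspace. If the dual body $\mathcal{P}^*$ is strictly convex and for every hyperplane (linear subspace of codimension one) $Y\subset X$ containing $W$ the convex bodies $(\mathcal{P}\cap Y)^*$ and $(\mathcal{Q}\cap Y)^*$ in $Y^*$ are translates of each other, then $\mathcal{P}^*$ and $\mathcal{Q}^*$ are translates of each other in $X^*$.
   Context: For a convex body $\mathcal{P}$ in a vector space $X$ containing the origin as an interior point, its dual is $\mathcal{P}^*=\{\boldsymbol\xi\in X^*:\boldsymbol\xi(\mathbf{v})\le1\text{ for all }\mathbf{v}\in\mathcal{P}\}$; for a subspace $Y$, $(\mathcal{P}\cap Y)^*\subset Y^*$ is the dual of $\mathcal{P}\cap Y$ taken within $Y$. *)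

(* Defs.v *)
From mathcomp Require Import all_boot all_algebra all_classical all_reals all_analysis.
Import GRing.Theory Num.Theory numFieldNormedType.Exports.
Set Implicit Arguments. Unset Strict Implicit. Unset Printing Implicit Defensive.
Local Open Scope classical_set_scope.
Local Open Scope ring_scope.

(* The space X is modelled as 'rV[R]_n (R : realType), and its dual X^dual is
   identified with 'rV[R]_n via the pairing  xi(v) = \sum_i xi_i v_i. *)
Definition pairing (R : realType) (n : nat) (xi v : 'rV[R]_n) : R :=
  \sum_(i < n) xi 0 i * v 0 i.

Definition convex_set (R : realType) (n : nat) (K : set 'rV[R]_n) : Prop :=
  forall x y t, K x -> K y -> 0 <= t <= 1 -> K ((1 - t) *: x + t *: y).

Definition convex_body (R : realType) (n : nat) (K : set 'rV[R]_n) : Prop :=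
  convex_set K /\ compact K /\ (interior K !=set0).

(* strictly convex: every open segment between distinct points lies in the interior
   (equivalently, the boundary contains no nondegenerate segment) *)
Definition strictly_convex (R : realType) (n : nat) (K : set 'rV[R]_n) : Prop :=
  forall x y t, K x -> K y -> x != y -> 0 < t < 1 ->
    interior K ((1 - t) *: x + t *: y).

Definition dual_body (R : realType) (n : nat) (P : set 'rV[R]_n) : set 'rV[R]_n :=
  [set xi | forall v, P v -> pairing xi v <= 1].

Definition translates (R : realType) (n : nat) (A B : set 'rV[R]_n) : Prop :=
  exists c : 'rV[R]_n, A = [set c + b | b in B].

(* For a subspace Y (row space of the matrix Y), functionals on Y are exactly the
   restrictions of functionals xi in X^dual.  [sub_dual_pre Y P] is the preimage of
   (P cap Y)^dual (subset of Y^dual) under the (surjective, linear) restriction map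
   X^dual -> Y^dual. *)
Definition sub_dual_pre (R : realType) (n : nat) (Y : 'M[R]_n) (P : set 'rV[R]_n)
  : set 'rV[R]_n :=
  [set xi | forall v, P v -> (v <= Y)%MS -> pairing xi v <= 1].

(* (P cap Y)^dual and (Q cap Y)^dual are translates of each other in Y^dual:
   there is eta0 in Y^dual (represented by a lift c in X^dual) such that, for every
   eta in Y^dual (represented by any lift xi), eta is in (P cap Y)^dual iff
   eta - eta0 is in (Q cap Y)^dual. *)
Definition sub_duals_translates (R : realType) (n : nat) (Y : 'M[R]_n)
  (P Q : set 'rV[R]_n) : Prop :=
  exists c : 'rV[R]_n, forall xi : 'rV[R]_n,
    sub_dual_pre Y P xi <-> sub_dual_pre Y Q (xi - c).

(* Main.v *)
Require Import Defs.
From mathcomp Require Import all_boot all_algebra all_classical all_reals all_analysis.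
From mathcomp Require Import ring lra.
Import order.Order.TTheory GRing.Theory Num.Theory numFieldNormedType.Exports.
Set Implicit Arguments. Unset Strict Implicit.
Local Open Scope classical_set_scope.
Local Open Scope ring_scope.

Section S.
Variables (R : realType) (n : nat).
Implicit Types (c d u v w x y z : 'rV[R]_n) (q r : 'rV[R]_n -> R) (P : set 'rV[R]_n).

Lemma pairingD c x y : pairing c (x + y) = pairing c x + pairing c y.
Proof. by rewrite /pairing -big_split /=; apply: eq_bigr => i _; rewrite mxE mulrDr. Qed.
Lemma pairingZ c a x : pairing c (a *: x) = a * pairing c x.
Proof. by rewrite /pairing mulr_sumr; apply: eq_bigr => i _; rewrite mxE mulrCA. Qed.
Lemma pairingN c x : pairing c (- x) = - pairing c x.
Proof. by rewrite -scaleN1r pairingZ mulN1r. Qed.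
Lemma pairingC c x : pairing c x = pairing x c.
Proof. by apply: eq_bigr => i _; rewrite mulrC. Qed.
Lemma pairingDl c d x : pairing (c + d) x = pairing c x + pairing d x.
Proof. by rewrite !(pairingC _ x) pairingD. Qed.
Lemma pairingZl c a x : pairing (a *: c) x = a * pairing c x.
Proof. by rewrite !(pairingC _ x) pairingZ. Qed.
Lemma pairingBl c d x : pairing (c - d) x = pairing c x - pairing d x.
Proof. by rewrite pairingDl !(pairingC _ x) pairingN. Qed.
Lemma pairing_delta c i : pairing c 'e_i = c 0 i.
Proof.
rewrite /pairing (bigD1 i) //= mxE !eqxx mulr1 big1 ?addr0 // => j /negbTE ne.
by rewrite mxE ne andbF mulr0.
Qed.

Lemma pairing_self_gt0 x : x != 0 -> 0 < pairing x x.
Proof.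
move=> xn0; have [i xi] : exists i, x 0 i != 0.
  apply/existsP; apply: contraR xn0 => /existsPn h.
  by apply/eqP/rowP => i; rewrite mxE; exact/eqP/negPn/h.
rewrite /pairing (bigD1 i) //=.
have h1 : 0 < x 0 i * x 0 i.
  by rewrite lt_def mulf_neq0 //= -expr2 sqr_ge0.
have h2 : 0 <= \sum_(j < n | j != i) x 0 j * x 0 j.
  by apply: sumr_ge0 => j _; rewrite -expr2 sqr_ge0.
lra.
Qed.

Definition sublin q :=
  (forall a v, 0 < a -> q (a *: v) = a * q v) /\ (forall v w, q (v + w) <= q v + q w).

Lemma sublin0 q : sublin q -> q 0 = 0.
Proof. by move=> [hZ _]; have := hZ 2 0 (ltr0Sn _ 1); rewrite scaler0 => h; lra. Qed.

Lemma sublinZ0 q a v : sublin q -> 0 <= a -> q (a *: v) = a * q v.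
Proof.
move=> hq; rewrite le_eqVlt => /orP [/eqP <-|]; last exact: hq.1.
by rewrite scale0r mul0r sublin0.
Qed.

Lemma sublinN q v : sublin q -> 0 <= q v + q (- v).
Proof. by move=> hq; rewrite -(sublin0 hq) -{1}(addrN v); exact: hq.2. Qed.

Lemma sublin_convex q x y a : sublin q -> 0 <= a <= 1 ->
  q ((1 - a) *: x + a *: y) <= (1 - a) * q x + a * q y.
Proof.
move=> hq /andP [a0 a1].
by rewrite -(sublinZ0 _ hq a0) -(sublinZ0 _ hq) ?subr_ge0 //; exact: hq.2.
Qed.

Definition Qt q x v t := (q (x + t *: v) - q x) / t.
Definition DS q x v := [set y : R | exists2 t : R, 0 < t & y = Qt q x v t].
Definition dd q x v := inf (DS q x v).

Lemma Qt_lb q x v t : sublin q -> 0 < t -> - q (- v) <= Qt q x v t.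
Proof.
move=> hq t0; rewrite /Qt ler_pdivlMr //.
have : q x <= q (x + t *: v) + q (t *: - v).
  by rewrite -{1}(addrK (t *: v) x) -scalerN; exact: hq.2.
by rewrite (hq.1 _ _ t0) => h; rewrite mulNr mulrC; lra.
Qed.

Lemma DS_lbound q x v : sublin q -> has_lbound (DS q x v).
Proof. by move=> hq; exists (- q (- v)) => y [t t0 ->]; exact: Qt_lb. Qed.

Lemma dd_le q x v t : sublin q -> 0 < t -> dd q x v <= Qt q x v t.
Proof. by move=> hq t0; apply: (ge_inf (DS_lbound x v hq)); exists t. Qed.

Lemma dd_ge q x v m : (forall t, 0 < t -> m <= Qt q x v t) -> m <= dd q x v.
Proof.
move=> h; apply: lb_le_inf; first by exists (Qt q x v 1); exists 1.
by move=> y [t t0 ->]; exact: h.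
Qed.

Lemma Qt_mono q x v s t : sublin q -> 0 < s -> s <= t -> Qt q x v s <= Qt q x v t.
Proof.
move=> hq s0 st; have t0 : 0 < t by exact: lt_le_trans st.
have a01 : 0 <= s / t <= 1.
  by apply/andP; split; [rewrite divr_ge0 // ltW | rewrite ler_pdivrMr // mul1r].
have e : x + s *: v = (1 - s / t) *: x + (s / t) *: (x + t *: v).
  rewrite scalerDr scalerA divfK ?gt_eqF // addrA scalerBl scale1r subrK //.
have := sublin_convex x (x + t *: v) hq a01; rewrite -e => h.
have h2 : q (x + s *: v) - q x <= (s / t) * (q (x + t *: v) - q x).
  by rewrite mulrBr mulrBl mul1r in h *; lra.
rewrite /Qt; apply: le_trans (_ : (s / t * (q (x + t *: v) - q x)) / s <= _).
  by apply: ler_wpM2r => //; rewrite invr_ge0 ltW.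
have -> : s / t * (q (x + t *: v) - q x) / s = (q (x + t *: v) - q x) / t.
  by field; rewrite !gt_eqF.
by [].
Qed.

Lemma dd_le_q q x v : sublin q -> dd q x v <= q v.
Proof.
move=> hq; apply: le_trans (dd_le x v hq ltr01) _.
rewrite /Qt scale1r divr1; have := hq.2 x v; lra.
Qed.

Lemma dd_negself q u : sublin q -> dd q u (- u) <= - q u.
Proof.
move=> hq; have h2 : (0:R) < 2^-1 by rewrite invr_gt0 (ltr0Sn _ 1).
apply: le_trans (dd_le u (-u) hq h2) _.
rewrite /Qt (_ : u + 2^-1 *: - u = 2^-1 *: u); last first.
  by apply/rowP => j; rewrite !mxE; field.
rewrite (hq.1 _ _ h2).
have -> : (2^-1 * q u - q u) / 2^-1 = - q u by field.
by [].
Qed.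

Lemma mulVle (a b e : R) : 0 < a -> b <= a * e -> a^-1 * b <= e.
Proof. by move=> a0 h; rewrite -(ler_pM2l a0) mulrA divff ?gt_eqF // mul1r. Qed.

Lemma QZ q x a v t : 0 < a -> 0 < t -> Qt q x (a *: v) t = a * Qt q x v (a * t).
Proof.
move=> a0 t0; rewrite /Qt scalerA (mulrC t a); field.
by apply/andP; split; rewrite gt_eqF.
Qed.

Lemma ddZ q x a v : sublin q -> 0 < a -> dd q x (a *: v) = a * dd q x v.
Proof.
move=> hq a0; apply/eqP; rewrite eq_le; apply/andP; split.
  have h : a^-1 * dd q x (a *: v) <= dd q x v.
    apply: dd_ge => t t0; apply: mulVle => //.
    have ta : 0 < t / a by rewrite divr_gt0.
    have := dd_le x (a *: v) hq ta; rewrite QZ // (_ : a * (t / a) = t) //.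
    by field; rewrite gt_eqF.
  by move: h; rewrite -(ler_pM2l a0) mulrA divff ?gt_eqF // mul1r.
apply: dd_ge => t t0; rewrite QZ // ler_pM2l //; apply: dd_le => //.
exact: mulr_gt0.
Qed.

Lemma Qt_add q x v w s : sublin q -> 0 < s ->
  Qt q x (v + w) (s / 2) <= Qt q x v s + Qt q x w s.
Proof.
move=> hq s0; have h2 : (0:R) < 2^-1 by rewrite invr_gt0 (ltr0Sn _ 1).
have e : x + (s / 2) *: (v + w) = 2^-1 *: (x + s *: v) + 2^-1 *: (x + s *: w).
  by apply/rowP => j; rewrite !mxE; field.
have h := hq.2 (2^-1 *: (x + s *: v)) (2^-1 *: (x + s *: w)).
rewrite -e !(hq.1 _ _ h2) in h.
rewrite /Qt.
have -> : (q (x + s *: v) - q x) / s + (q (x + s *: w) - q x) / s =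
   ((2^-1 * q (x + s *: v) + 2^-1 * q (x + s *: w)) - q x) / (s / 2).
  by field; rewrite gt_eqF.
apply: ler_wpM2r; first by rewrite invr_ge0 divr_ge0 // ltW.
lra.
Qed.

Lemma ddD q x v w : sublin q -> dd q x (v + w) <= dd q x v + dd q x w.
Proof.
move=> hq.
have h : forall t1 t2, 0 < t1 -> 0 < t2 -> dd q x (v + w) <= Qt q x v t1 + Qt q x w t2.
  move=> t1 t2 t10 t20.
  have key : forall s, 0 < s -> s <= t1 -> s <= t2 ->
      dd q x (v + w) <= Qt q x v t1 + Qt q x w t2.
    move=> s s0 s1 s2.
    have s20 : 0 < s / 2 by rewrite divr_gt0.
    apply: le_trans (dd_le x (v + w) hq s20) _.
    apply: le_trans (Qt_add x v w hq s0) _.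
    by apply: lerD; apply: Qt_mono.
  have [h12|h21] := lerP t1 t2; first by apply: (key t1).
  by apply: (key t2) => //; exact: ltW.
have h' : forall t1, 0 < t1 -> dd q x (v + w) - Qt q x v t1 <= dd q x w.
  move=> t1 t10; apply: dd_ge => t2 t20; have := h t1 t2 t10 t20; lra.
have : dd q x (v + w) - dd q x w <= dd q x v.
  apply: dd_ge => t1 t10; have := h' t1 t10; lra.
lra.
Qed.

Lemma dd_sublin q x : sublin q -> sublin (dd q x).
Proof. by move=> hq; split => [a v a0|v w]; [exact: ddZ | exact: ddD]. Qed.

Lemma sublin_dir r d a : sublin r -> r d + r (- d) = 0 -> r (a *: d) = a * r d.
Proof.
move=> hr hd; have [a0|a0] := lerP 0 a; first exact: sublinZ0.
have -> : a *: d = (- a) *: (- d) by rewrite scalerN scaleNr opprK.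
rewrite (sublinZ0 _ hr) ?oppr_ge0 ?ltW //.
have -> : r (- d) = - r d by lra.
by rewrite mulrNN.
Qed.

Lemma sum_le r (F : 'I_n -> 'rV[R]_n) : sublin r -> r (\sum_i F i) <= \sum_i r (F i).
Proof.
move=> hr; apply: (big_ind2 (fun a b => r a <= b)); first by rewrite sublin0.
- move=> a1 b1 a2 b2 h1 h2; apply: le_trans (hr.2 _ _) _; exact: lerD.
- by [].
Qed.

Lemma sublin_lin r : sublin r -> (forall i, r 'e_i + r (- 'e_i) = 0) ->
  forall v, r v = pairing (\row_i r 'e_i) v.
Proof.
move=> hr he.
have up : forall v, r v <= pairing (\row_i r 'e_i) v.
  move=> v; rewrite {1}(row_sum_delta v); apply: le_trans (sum_le _ hr) _.
  suff -> : \sum_i r (v 0 i *: 'e_i) = pairing (\row_i r 'e_i) v by [].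
  by apply: eq_bigr => i _; rewrite sublin_dir // mxE mulrC.
move=> v; apply/eqP; rewrite eq_le up /=.
have := up (-v); rewrite pairingN; have := sublinN v hr; lra.
Qed.

Lemma iter_dd (ds : seq 'rV[R]_n) : forall q, sublin q -> exists r,
  [/\ sublin r, (forall v, r v <= q v) & forall d, d \in ds -> r d + r (- d) = 0].
Proof.
elim: ds => [|d ds IH] q hq.
  by exists q; split.
have hq' := dd_sublin d hq.
have [r [hr rle rds]] := IH _ hq'.
exists r; split => //.
  by move=> v; apply: le_trans (rle v) (dd_le_q _ _ hq).
move=> e; rewrite inE => /orP [/eqP ->|/rds //].
have := rle d; have := rle (-d); have := dd_le_q d d hq.
have := dd_negself d hq; have := sublinN d hr; lra.
Qed.

Lemma hb q u : sublin q -> exists c, (forall v, pairing c v <= q v) /\ pairing c u = q u.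
Proof.
move=> hq; have hq1 := dd_sublin u hq.
have [r [hr rle rd]] := iter_dd [seq 'e_i | i <- enum 'I_n] hq1.
have hin : forall (i : 'I_n), (delta_mx 0 i : 'rV[R]_n) \in [seq 'e_i | i <- enum 'I_n].
  by move=> i; apply/mapP; exists i => //; rewrite mem_enum.
have lin := sublin_lin hr (fun i => rd _ (hin i)).
exists (\row_i r 'e_i); split.
  by move=> v; rewrite -lin; apply: le_trans (rle v) (dd_le_q _ _ hq).
apply/eqP; rewrite eq_le; apply/andP; split.
  by rewrite -lin; apply: le_trans (rle u) (dd_le_q _ _ hq).
have e : r (- u) = - r u by rewrite !lin pairingN.
rewrite -lin; have := rle (-u); have := dd_negself u hq; lra.
Qed.

Lemma interior_ball (P : set 'rV[R]_n) x : interior P x ->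
  exists2 e : R, 0 < e & forall y, (forall j, `|x 0 j - y 0 j| < e) -> P y.
Proof.
move=> /nbhs_ballP [e e0 he]; exists e => // y hy; apply: he.
by split => // i j; rewrite (ord1 i) /ball /=; exact: hy.
Qed.

Lemma small_mult x e : 0 < e -> exists2 k : R, 0 < k & forall j, `|k * x 0 j| < e.
Proof.
move=> e0; set S := \sum_j `|x 0 j|.
have S0 : 0 <= S by apply: sumr_ge0 => j _.
set k := e / (2 * (S + 1)).
have d0 : 0 < 2 * (S + 1) by apply: mulr_gt0; lra.
have k0 : 0 < k by apply: divr_gt0.
have ke : k * (2 * (S + 1)) = e by rewrite /k divfK // gt_eqF.
exists k => // j.
have vj : `|x 0 j| <= S by rewrite /S (bigD1 j) //= lerDl sumr_ge0.
rewrite normrM (gtr0_norm k0).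
apply: le_lt_trans (ler_wpM2l (ltW k0) vj) _.
by rewrite -[X in _ < X]ke ltr_pM2l //; lra.
Qed.

Definition GS (P : set 'rV[R]_n) v := [set l : R | 0 < l /\ P (l^-1 *: v)].
Definition gauge P v := inf (GS P v).

Lemma GS_lb P v : has_lbound (GS P v).
Proof. by exists 0 => l [l0 _]; exact: ltW. Qed.

Lemma gauge_le P v l : 0 < l -> P (l^-1 *: v) -> gauge P v <= l.
Proof. by move=> l0 Pl; apply: (ge_inf (GS_lb P v)). Qed.

Lemma GS_nonempty P v : interior P 0 -> GS P v !=set0.
Proof.
move=> /interior_ball [e e0 he].
have [k k0 hk] := small_mult v e0.
exists k^-1; split; first by rewrite invr_gt0.
apply: he => j; rewrite invrK !mxE sub0r normrN; exact: hk.
Qed.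

Lemma gauge_ge0 P v : interior P 0 -> 0 <= gauge P v.
Proof. by move=> hI; apply: lb_le_inf (GS_nonempty v hI) _ => l [l0 _]; exact: ltW. Qed.

Lemma gauge_in P v : P v -> gauge P v <= 1.
Proof. by move=> Pv; apply: gauge_le; rewrite ?ltr01 // invr1 scale1r. Qed.

Lemma gauge_dual P (Y : 'M[R]_n) xi v : interior P 0 ->
  (forall p, P p -> (p <= Y)%MS -> pairing xi p <= 1) -> (v <= Y)%MS ->
  pairing xi v <= gauge P v.
Proof.
move=> hI h vY; apply: lb_le_inf (GS_nonempty v hI) _ => l [l0 Pl].
have := h _ Pl (scalemx_sub _ vY); rewrite pairingZ => H.
have := ler_wpM2l (ltW l0) H.
by rewrite mulrA mulfV ?gt_eqF // mul1r mulr1.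
Qed.

Lemma gauge_dual_full P xi v : interior P 0 -> dual_body P xi -> pairing xi v <= gauge P v.
Proof.
move=> hI hd; apply: (gauge_dual (Y := 1%:M)) => //; last exact: submx1.
by move=> p Pp _; exact: hd.
Qed.

Lemma gaugeZ P a v : interior P 0 -> 0 < a -> gauge P (a *: v) = a * gauge P v.
Proof.
move=> hI a0; apply/eqP; rewrite eq_le; apply/andP; split.
  have : a^-1 * gauge P (a *: v) <= gauge P v.
    apply: lb_le_inf (GS_nonempty _ hI) _ => l [l0 Pl].
    apply: mulVle => //; apply: gauge_le; first exact: mulr_gt0.
    rewrite (_ : (a * l)^-1 *: (a *: v) = l^-1 *: v) //.
    by apply/rowP => j; rewrite !mxE; field; rewrite !gt_eqF.
  by rewrite -(ler_pM2l a0) mulrA mulfV ?gt_eqF // mul1r.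
apply: lb_le_inf (GS_nonempty _ hI) _ => l [l0 Pl].
have : gauge P v <= a^-1 * l.
  apply: gauge_le; first by rewrite mulr_gt0 ?invr_gt0.
  rewrite (_ : (a^-1 * l)^-1 *: v = l^-1 *: (a *: v)) //.
  by apply/rowP => j; rewrite !mxE; field; rewrite !gt_eqF.
by rewrite -(ler_pM2l a0) mulrA mulfV ?gt_eqF // mul1r.
Qed.

Lemma gaugeD P v w : Defs.convex_set P -> interior P 0 ->
  gauge P (v + w) <= gauge P v + gauge P w.
Proof.
move=> hC hI.
have h : forall a b, GS P v a -> GS P w b -> gauge P (v + w) <= a + b.
  move=> a b [a0 Pa] [b0 Pb]; apply: gauge_le; first exact: addr_gt0.
  have ab0 : 0 < a + b by exact: addr_gt0.
  have t01 : 0 <= b / (a + b) <= 1.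
    apply/andP; split; first by rewrite divr_ge0 // ltW.
    by rewrite ler_pdivrMr // mul1r; lra.
  have := hC _ _ _ Pa Pb t01.
  rewrite (_ : (1 - b / (a + b)) *: (a^-1 *: v) + b / (a + b) *: (b^-1 *: w)
     = (a + b)^-1 *: (v + w)) //.
  by apply/rowP => j; rewrite !mxE; field; rewrite !gt_eqF.
have h1 : forall b, GS P w b -> gauge P (v + w) - b <= gauge P v.
  move=> b hb; apply: lb_le_inf (GS_nonempty _ hI) _ => a ha.
  have := h a b ha hb; lra.
have : gauge P (v + w) - gauge P v <= gauge P w.
  apply: lb_le_inf (GS_nonempty _ hI) _ => b hb; have := h1 b hb; lra.
lra.
Qed.

Lemma gauge_sublin P : Defs.convex_set P -> interior P 0 -> sublin (gauge P).
Proof. by move=> hC hI; split => [a v a0|v w]; [exact: gaugeZ | exact: gaugeD]. Qed.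

Lemma hyperplane w z : (2 < n)%N -> exists Y : 'M[R]_n,
  [/\ \rank Y = n.-1, (w <= Y)%MS & (z <= Y)%MS].
Proof.
move=> n2.
pose A := col_mx w z.
have rA : (\rank A <= 2)%N := rank_leq_row A.
pose K := kermx A^T.
have rK : \rank K = (n - \rank A)%N by rewrite mxrank_ker mxrank_tr.
have Kn0 : K != 0.
  by rewrite -mxrank_eq0 rK subn_eq0 -ltnNge; exact: leq_ltn_trans rA n2.
have [i Ki] : exists i, row i K != 0.
  apply/existsP; apply: contraR Kn0 => /existsPn h.
  by apply/eqP/row_matrixP => i; rewrite row0; exact/eqP/negPn/h.
pose b := row i K.
have bA : b *m A^T = 0 by apply/eqP; rewrite -sub_kermx row_sub.
have [bw bz] : b *m w^T = 0 /\ b *m z^T = 0.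
  move: bA; rewrite /A tr_col_mx mul_mx_row => /eqP.
  by rewrite row_mx_eq0 => /andP [/eqP -> /eqP ->].
pose a := b^T.
have an0 : a != 0.
  apply: contra Ki => /eqP h; apply/eqP; rewrite -[row i K]trmxK.
  by move: h; rewrite /a /b => ->; rewrite trmx0.
have ra : \rank a = 1%N.
  by apply/eqP; rewrite eqn_leq rank_leq_col lt0n mxrank_eq0 an0.
exists (kermx a); split.
- by rewrite mxrank_ker ra subn1.
- rewrite sub_kermx (_ : w *m a = (b *m w^T)^T); last by rewrite trmx_mul trmxK.
  by rewrite bw trmx0.
- rewrite sub_kermx (_ : z *m a = (b *m z^T)^T); last by rewrite trmx_mul trmxK.
  by rewrite bz trmx0.
Qed.

Lemma onY P Q (Y : 'M[R]_n) c v : Defs.convex_set P -> Defs.convex_set Q ->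
  interior P 0 -> interior Q 0 ->
  (forall xi, sub_dual_pre Y P xi <-> sub_dual_pre Y Q (xi - c)) -> (v <= Y)%MS ->
  gauge P v = gauge Q v + pairing c v.
Proof.
move=> cP cQ iP iQ hY vY.
have [xi [xile xiv]] := hb v (gauge_sublin cP iP).
have [eta [etale etav]] := hb v (gauge_sublin cQ iQ).
have h1 : sub_dual_pre Y P xi.
  by move=> p Pp _; apply: le_trans (xile p) (gauge_in Pp).
have h2 : sub_dual_pre Y Q eta.
  by move=> p Pp _; apply: le_trans (etale p) (gauge_in Pp).
have := gauge_dual iQ ((hY xi).1 h1) vY; rewrite pairingBl xiv.
have h3 : sub_dual_pre Y P (eta + c) by apply/hY; rewrite addrK.
have := gauge_dual iP h3 vY; rewrite pairingDl etav.
lra.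
Qed.

Lemma dd_lin P w : Defs.convex_set P -> interior P 0 -> w != 0 ->
  strictly_convex (dual_body P) ->
  forall d, dd (gauge P) w d + dd (gauge P) w (- d) = 0.
Proof.
move=> cP iP w0 sc d.
have hg := gauge_sublin cP iP.
have hr := dd_sublin w hg.
apply/eqP; rewrite eq_le (sublinN d hr) andbT.
rewrite leNgt; apply/negP => hpos.
have [c1 [c1le c1d]] := hb d hr.
have [c2 [c2le c2d]] := hb (- d) hr.
have c12 : c1 != c2.
  apply/eqP => e; move: c2d; rewrite -e pairingN c1d => h; lra.
have inK : forall c, (forall v, pairing c v <= dd (gauge P) w v) -> dual_body P c.
  move=> c cle p Pp; apply: le_trans (cle p) _.
  exact: le_trans (dd_le_q _ _ hg) (gauge_in Pp).
have cw : forall c, (forall v, pairing c v <= dd (gauge P) w v) ->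
    pairing c w = gauge P w.
  move=> c cle; apply/eqP; rewrite eq_le; apply/andP; split.
    exact: le_trans (cle w) (dd_le_q _ _ hg).
  have := cle (- w); have := dd_negself w hg; rewrite pairingN; lra.
have half : 0 < (2^-1 : R) < 1.
  apply/andP; split; first by rewrite invr_gt0 (ltr0Sn _ 1).
  by rewrite invf_lt1 ?(ltr0Sn _ 1) // ltr1n.
have := sc c1 c2 (2^-1) (inK _ c1le) (inK _ c2le) c12 half.
set m := (1 - 2^-1) *: c1 + 2^-1 *: c2.
move=> /interior_ball [e e0 he].
have [k k0 hk] := small_mult w e0.
have Km : dual_body P (m + k *: w).
  apply: he => j; rewrite [(m + _) 0 j]mxE [(k *: w) 0 j]mxE.
  by rewrite opprD addrA subrr sub0r normrN; exact: hk.
have := gauge_dual_full w iP Km.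
rewrite pairingDl pairingZl /m pairingDl !pairingZl (cw _ c1le) (cw _ c2le).
have := mulr_gt0 k0 (pairing_self_gt0 w0).
lra.
Qed.

End S.

Unset Implicit Arguments.

Theorem theorem4p5 (R : realType) (n : nat) (P Q : set 'rV[R]_n) (W : 'M[R]_n) :
  (2 < n)%N ->
  convex_body P -> convex_body Q ->
  interior P 0 -> interior Q 0 ->
  \rank W = 1%N ->
  strictly_convex (dual_body P) ->
  (forall Y : 'M[R]_n, \rank Y = n.-1 -> (W <= Y)%MS ->
     sub_duals_translates Y P Q) ->
  translates (dual_body P) (dual_body Q).
Proof.
move=> n2 [cP _] [cQ _] iP iQ rW sc hyp.
have hg := gauge_sublin cP iP; have hh := gauge_sublin cQ iQ.
have Wn0 : W != 0 by apply/eqP => W0; move: rW; rewrite W0 mxrank0.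
have [i wi] : exists i, row i W != 0.
  apply/existsP; apply: contraR Wn0 => /existsPn h.
  by apply/eqP/row_matrixP => j; rewrite row0; exact/eqP/negPn/h.
pose w := row i W.
have rw : \rank w = 1%N.
  by apply/eqP; rewrite eqn_leq rank_leq_row lt0n mxrank_eq0 wi.
have wW : (W <= w)%MS by rewrite -(mxrank_leqif_sup (row_sub i W)).2 rw rW.
pose f := fun v => gauge P v - gauge Q v.
have L : forall z, exists c, forall a b,
    f (a *: w + b *: z) = pairing c (a *: w + b *: z).
  move=> z; have [Y [rY wY zY]] := hyperplane w z n2.
  have [c hc] := hyp Y rY (submx_trans wW wY).
  exists c => a b; rewrite /f (onY cP cQ iP iQ hc); first by ring.
  exact: addmx_sub (scalemx_sub _ wY) (scalemx_sub _ zY).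
have fL : forall z a b, f (a *: w + b *: z) = a * f w + b * f z.
  move=> z a b; have [c hc] := L z.
  have ew : f w = pairing c w.
    by have := hc 1 0; rewrite scale1r scale0r addr0.
  have ez : f z = pairing c z.
    by have := hc 0 1; rewrite scale1r scale0r add0r.
  by rewrite hc ew ez pairingD !pairingZ.
have fZ : forall z b, f (b *: z) = b * f z.
  by move=> z b; have := fL z 0 b; rewrite scale0r add0r mul0r add0r.
have fN : forall z, f (- z) = - f z.
  by move=> z; rewrite -scaleN1r fZ mulN1r.
have f0 : f 0 = 0 by have := fZ 0 0; rewrite scale0r mul0r.
have hr := dd_sublin w hg.
have rlin := sublin_lin hr (fun i => dd_lin cP iP wi sc 'e_i).
have rD : forall z1 z2, dd (gauge P) w (z1 + z2) =
    dd (gauge P) w z1 + dd (gauge P) w z2.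
  by move=> z1 z2; rewrite !rlin pairingD.
have super : forall z1 z2, f z1 + f z2 <= f (z1 + z2).
  move=> z1 z2.
  have key : forall s, 0 < s -> f z1 + f z2 - f (z1 + z2) <=
      Qt (gauge P) w z1 s + Qt (gauge P) w z2 s - Qt (gauge P) w (z1 + z2) (s / 2).
    move=> s s0.
    have e2 : (w + s *: z1) + (w + s *: z2) = 2 *: (w + (s / 2) *: (z1 + z2)).
      by apply/rowP => j; rewrite !mxE; field.
    have H := hh.2 (w + s *: z1) (w + s *: z2).
    rewrite e2 (hh.1 _ _ (ltr0Sn _ 1)) in H.
    have F1 := fL z1 1 s; have F2 := fL z2 1 s; have F3 := fL (z1 + z2) 1 (s / 2).
    rewrite scale1r mul1r in F1 F2 F3.
    rewrite /f in F1 F2 F3.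
    have H2 : s * (f z1 + f z2 - f (z1 + z2)) <=
        gauge P (w + s *: z1) + gauge P (w + s *: z2)
        - 2 * gauge P (w + (s / 2) *: (z1 + z2)).
      have -> : s * (f z1 + f z2 - f (z1 + z2)) =
          s * f z1 + s * f z2 - 2 * (s / 2 * f (z1 + z2)) by field.
      rewrite /f; lra.
    rewrite /Qt.
    have -> : (gauge P (w + s *: z1) - gauge P w) / s +
       (gauge P (w + s *: z2) - gauge P w) / s -
       (gauge P (w + (s / 2) *: (z1 + z2)) - gauge P w) / (s / 2) =
       (gauge P (w + s *: z1) + gauge P (w + s *: z2)
        - 2 * gauge P (w + (s / 2) *: (z1 + z2))) / s.
      by field; rewrite gt_eqF.
    by rewrite ler_pdivlMr // mulrC.
  have key2 : forall t1 t2, 0 < t1 -> 0 < t2 ->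
      f z1 + f z2 - f (z1 + z2) + dd (gauge P) w (z1 + z2) <=
      Qt (gauge P) w z1 t1 + Qt (gauge P) w z2 t2.
    move=> t1 t2 t10 t20.
    have k : forall s, 0 < s -> s <= t1 -> s <= t2 ->
        f z1 + f z2 - f (z1 + z2) + dd (gauge P) w (z1 + z2) <=
        Qt (gauge P) w z1 t1 + Qt (gauge P) w z2 t2.
      move=> s s0 s1 s2.
      have s20 : 0 < s / 2 by rewrite divr_gt0.
      have := key s s0; have := dd_le w (z1 + z2) hg s20.
      have := Qt_mono w z1 hg s0 s1; have := Qt_mono w z2 hg s0 s2.
      lra.
    have [h12|h21] := lerP t1 t2; first by apply: (k t1).
    by apply: (k t2) => //; exact: ltW.
  have key3 : forall t1, 0 < t1 ->
      f z1 + f z2 - f (z1 + z2) + dd (gauge P) w (z1 + z2)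
        - Qt (gauge P) w z1 t1 <= dd (gauge P) w z2.
    move=> t1 t10; apply: dd_ge => t2 t20; have := key2 t1 t2 t10 t20; lra.
  have : f z1 + f z2 - f (z1 + z2) + dd (gauge P) w (z1 + z2)
        - dd (gauge P) w z2 <= dd (gauge P) w z1.
    apply: dd_ge => t1 t10; have := key3 t1 t10; lra.
  rewrite rD; lra.
have fD : forall z1 z2, f (z1 + z2) = f z1 + f z2.
  move=> z1 z2; apply/eqP; rewrite eq_le super andbT.
  have := super (- z1) (- z2); rewrite -opprD !fN; lra.
pose cf := \row_j f 'e_j.
have flin : forall v, f v = pairing cf v.
  move=> v; rewrite {1}(row_sum_delta v) (big_morph f fD f0).
  by apply: eq_bigr => j _; rewrite fZ mxE mulrC.
exists cf; apply/funext => xi; apply/propext; split.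
  move=> hxi; exists (xi - cf); last by rewrite addrC subrK.
  move=> q Qq; rewrite pairingBl.
  have := gauge_dual_full q iP hxi; have := gauge_in Qq; have := flin q.
  rewrite /f; lra.
case=> b hb <- p Pp; rewrite pairingDl.
have := gauge_dual_full p iQ hb; have := gauge_in Pp; have := flin p.
rewrite /f; lra.
Qed.
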